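(* Let $d\ge 1$ and $q\ge 1$, let $\mathbf c_1,\dots,\mathbf c_q\in\mathbb R^d$ be discrete lattice velocities with weights $w_1,\dots,w_q>0$ and lattice speed of sound $c_s>0$, and let $\mathbf h:\mathbb R^d\to\mathbb R^q$ be given componentwise by $$h_i(\mathbf u)=\sqrt{w_i}\Big(1+\frac{\mathbf c_i\cdot\mathbf u}{2c_s^2}+\frac{(\mathbf c_i\cdot\mathbf u)^2}{8c_s^4}-\frac{\|\mathbf u\|^2}{4c_s^2}\Big).$$ For $\hat{\mathbf u}\in\mathbb R^d$ let $\bar J(\hat{\mathbf u})=[\mathbf h(\hat{\mathbf u}),\partial_1\mathbf h(\hat{\mathbf u}),\dots,\partial_d\mathbf h(\hat{\mathbf u})]\in\mathbb R^{q\times(d+1)}$, and, whenever $\bar J(\hat{\mathbf u})$ has full column rank, define the denoising operator $\mathcal D(\hat{\mathbf u})=\bar J(\hat{\mathbf u})\big(\bar J(\hat{\mathbf u})^\top\bar J(\hat{\mathbf u})\big)^{-1}\bar J(\hat{\mathbf u})^\top$ (the orthogonal projector onto the column space of $\bar J(\hat{\mathbf u})$). Let $g$ be a lattice symmetry, i.e. an orthogonal map $R_g\in O(d)$ together with a permutation $\sigma_g$ of $\{1,\dots,q\}$ such that $\mathbf c_{\sigma_g(i)}=R_g\mathbf c_i$ and $w_{\sigma_g(i)}=w_i$ for all $i$, and let $P_g\in\mathbb R^{q\times q}$ be the permutation matrix with $(P_g\mathbf f)_i=f_{\sigma_g^{-1}(i)}$ for $\mathbf f\in\mathbb R^q$.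 Then for every $\hat{\mathbf u}\in\mathbb R^d$ with $\bar J(\hat{\mathbf u})$ of full column rank, $\bar J(R_g\hat{\mathbf u})$ also has full column rank and $$\mathcal D(R_g\hat{\mathbf u})\,P_g=P_g\,\mathcal D(\hat{\mathbf u}).$$
   Context: This is the setting of a D$d$Q$q$ lattice Boltzmann model. The lattice is assumed to satisfy the standard isotropy conditions: $\sum_i w_i=1$, $\sum_i w_i c_{ik}c_{il}=c_s^2\delta_{kl}$, $\sum_i w_i c_{ik}c_{il}c_{ip}c_{iq}=c_s^4(\delta_{kl}\delta_{pq}+\delta_{kp}\delta_{lq}+\delta_{kq}\delta_{lp})$, and all weighted velocity moments of orders 1, 3 and 5 vanish. The function $\mathbf h$ is the (second-order) square-root equilibrium amplitude per unit density, $\partial_k$ denotes the partial derivative with respect to the $k$-th velocity component. *)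

(* Defs.v *)
From HB Require Import structures.
From mathcomp Require Import all_boot all_order all_algebra all_fingroup.
From mathcomp Require Import all_classical all_reals all_analysis.
Set Implicit Arguments. Unset Strict Implicit. Unset Printing Implicit Defensive.
Import Order.TTheory GRing.Theory Num.Theory.
Import numFieldNormedType.Exports.
Local Open Scope ring_scope.

Section LBM.
Variables (R : realType) (d q : nat).

Definition dotv (u v : 'cV[R]_d) : R := \sum_(k < d) u k 0 * v k 0.

Definition evec (k : 'I_d) : 'cV[R]_d := delta_mx k 0.

Definition partial (k : 'I_d) (f : 'cV[R]_d -> R) (u : 'cV[R]_d) : R :=
  'D_(evec k) f u.

Variables (c : 'I_q -> 'cV[R]_d) (w : 'I_q -> R) (cs : R).

Definition lattice_isotropic : Prop :=
  (\sum_i w i = 1) /\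
  [/\ (forall k : 'I_d, \sum_i w i * c i k 0 = 0),
      (forall k l : 'I_d, \sum_i w i * c i k 0 * c i l 0 = cs ^+ 2 * (k == l)%:R),
      (forall k l p : 'I_d, \sum_i w i * c i k 0 * c i l 0 * c i p 0 = 0),
      (forall k l p r : 'I_d,
          \sum_i w i * c i k 0 * c i l 0 * c i p 0 * c i r 0 =
          cs ^+ 4 * ((k == l)%:R * (p == r)%:R + (k == p)%:R * (l == r)%:R
                     + (k == r)%:R * (l == p)%:R)) &
      (forall k l p r s : 'I_d,
          \sum_i w i * c i k 0 * c i l 0 * c i p 0 * c i r 0 * c i s 0 = 0)].

Definition hcomp (i : 'I_q) (u : 'cV[R]_d) : R :=
  Num.sqrt (w i) * (1 + dotv (c i) u / (2 * cs ^+ 2)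
                      + (dotv (c i) u) ^+ 2 / (8 * cs ^+ 4)
                      - dotv u u / (4 * cs ^+ 2)).

Definition Jbar (u : 'cV[R]_d) : 'M[R]_(q, d.+1) :=
  \matrix_(i < q, j < d.+1)
    match unlift ord0 j with
    | None => hcomp i u
    | Some k => partial k (hcomp i) u
    end.

Definition denoise (u : 'cV[R]_d) : 'M[R]_q :=
  Jbar u *m invmx ((Jbar u)^T *m Jbar u) *m (Jbar u)^T.

End LBM.

(* permutation matrix with (P f)_i = f_{sigma^{-1}(i)} *)
Definition Pmat (R : realType) (q : nat) (s : {perm 'I_q}) : 'M[R]_q :=
  perm_mx (s^-1)%g.

(* Main.v *)
Require Import Defs.
From HB Require Import structures.
From mathcomp Require Import all_boot all_order all_algebra all_fingroup.
From mathcomp Require Import all_classical all_reals all_analysis.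
From mathcomp Require Import ring lra.
Import Order.TTheory GRing.Theory Num.Theory.
Import numFieldNormedType.Exports.
Set Implicit Arguments. Unset Strict Implicit. Unset Printing Implicit Defensive.
Local Open Scope ring_scope.
Local Open Scope classical_set_scope.

Lemma derive_quad (R : realType) (d : nat) (f : 'cV[R]_d -> R) x v (a b e : R) :
  (forall h : R, f (h *: v + x) = a + b * h + e * h ^+ 2) -> 'D_v f x = b.
Proof.

move=> Hf.
have fx : f x = a by rewrite -[x]add0r -(scale0r v) Hf; rewrite expr0n /=; ring.
rewrite /derive /=; apply: cvg_lim => //.
have -> : b = b + e * 0 by rewrite mulr0 addr0.
apply: (@cvg_trans _ ((fun h : R => b + e * h) @ 0^')).
  apply: near_eq_cvg; near=> h.
  have hn0 : h != 0 by near: h; exact: nbhs_dnbhs_neq.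
  rewrite /shift /= fx Hf -[_ *: _]/(_ * _).
  by field.
apply: cvg_within_filter.
apply: cvgD; first exact: cvg_cst.
apply: cvgMr. exact: cvg_id.
Unshelve. all: by end_near.
Qed.

Section H.
Variables (R : realType) (d : nat).
Lemma dotvE (u v : 'cV[R]_d) : dotv u v = (u^T *m v) 0 0.
Proof. by rewrite /dotv !mxE; apply: eq_bigr => k _; rewrite !mxE. Qed.
Lemma dotvC (u v : 'cV[R]_d) : dotv u v = dotv v u.
Proof. by rewrite /dotv; apply: eq_bigr => k _; rewrite mulrC. Qed.
Lemma dotvDr (a u v : 'cV[R]_d) : dotv a (u + v) = dotv a u + dotv a v.
Proof. by rewrite !dotvE mulmxDr mxE. Qed.
Lemma dotvZr (a u : 'cV[R]_d) h : dotv a (h *: u) = h * dotv a u.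
Proof. by rewrite !dotvE -scalemxAr mxE. Qed.
Lemma dotvDl (a u v : 'cV[R]_d) : dotv (u + v) a = dotv u a + dotv v a.
Proof. by rewrite dotvC dotvDr !(dotvC a). Qed.
Lemma dotvZl (a u : 'cV[R]_d) h : dotv (h *: u) a = h * dotv u a.
Proof. by rewrite dotvC dotvZr dotvC. Qed.
Lemma dotv_evec (a : 'cV[R]_d) k : dotv a (evec R k) = a k 0.
Proof.
rewrite /dotv (bigD1 k) //= big1 => [|j jk]; rewrite /evec !mxE ?eqxx.
  by rewrite mulr1 addr0.
by rewrite (negbTE jk) mulr0.
Qed.
Lemma dotvRR (Rg : 'M[R]_d) (hRg : Rg^T *m Rg = 1%:M) u v :
  dotv (Rg *m u) (Rg *m v) = dotv u v.
Proof. by rewrite !dotvE trmx_mul -mulmxA (mulmxA Rg^T) hRg mul1mx. Qed.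
End H.

Lemma partial_hcomp (R : realType) (d q : nat) (c : 'I_q -> 'cV[R]_d) w cs i k x :
  partial k (hcomp c w cs i) x =
  Num.sqrt (w i) * (c i k 0 / (2 * cs ^+ 2)
     + 2 * c i k 0 * dotv (c i) x / (8 * cs ^+ 4) - 2 * x k 0 / (4 * cs ^+ 2)).
Proof.
rewrite /partial.
apply: (@derive_quad R d _ x (evec R k) (hcomp c w cs i x) _
  (Num.sqrt (w i) * ((c i k 0)^+2 / (8 * cs ^+ 4) - dotv (evec R k) (evec R k) / (4 * cs ^+ 2)))).
move=> h; rewrite /hcomp !(dotvDr, dotvDl, dotvZr, dotvZl, dotv_evec).
rewrite (dotvC (evec R k) x) dotv_evec /evec !mxE eqxx /=.
rewrite /GRing.scale /=.
ring.
Qed.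

Section Mx.
Variable (R : realType).

Lemma invmx3 n (A B C : 'M[R]_n) : A \in unitmx -> B \in unitmx -> C \in unitmx ->
  invmx (A *m B *m C) = invmx C *m invmx B *m invmx A.
Proof.
move=> uA uB uC.
have uX : A *m B *m C \in unitmx by rewrite !unitmx_mul uA uB uC.
have XY : A *m B *m C *m (invmx C *m invmx B *m invmx A) = 1%:M.
  by rewrite !mulmxA (mulmxK uC) (mulmxK uB) mulmxV.
by rewrite -[RHS]mul1mx -(mulVmx uX) -(mulmxA (invmx _)) XY mulmx1.
Qed.

Lemma gram_unit m n (J : 'M[R]_(m, n)) : \rank J = n -> J^T *m J \in unitmx.
Proof.
move=> hr; rewrite -row_free_unit -kermx_eq0; apply/eqP/row_matrixP => i.
rewrite row0; set v := row i _.
have hv : v *m (J^T *m J) = 0 by rewrite /v -row_mul mulmx_ker row0.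
have h2 : (J *m v^T)^T *m (J *m v^T) = 0.
  by rewrite trmx_mul trmxK mulmxA -(mulmxA v) hv mul0mx.
have hJv : J *m v^T = 0.
  apply/matrixP => a b; rewrite (ord1 b) [RHS]mxE.
  have := congr1 (fun M : 'M[R]_1 => M 0 0) h2; rewrite /= [LHS]mxE [RHS]mxE => hs.
  have H0 : forall j : 'I_m, true -> 0 <= (J *m v^T)^T 0 j * (J *m v^T) j 0.
    by move=> j _; rewrite [X in X * _]mxE -expr2 sqr_ge0.
  have := psumr_eq0P H0 hs (i:=a) isT.
  by rewrite [X in X * _]mxE => /eqP; rewrite mulf_eq0 orbb => /eqP.
have : v *m J^T = 0 *m J^T by rewrite -[v]trmxK -trmx_mul hJv trmx0 mul0mx.
move/row_free_inj; apply; by rewrite /row_free mxrank_tr hr.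
Qed.

Lemma rank_PM m n (P : 'M[R]_m) (J : 'M[R]_(m, n)) (M : 'M[R]_n) :
  P \in unitmx -> M \in unitmx -> \rank (P *m J *m M) = \rank J.
Proof.
move=> uP uM; rewrite mxrankMfree ?row_free_unit //.
by rewrite -mxrank_tr trmx_mul mxrankMfree ?mxrank_tr // row_free_unit unitmx_tr.
Qed.
End Mx.

Definition Mrot (R : realType) d (Rg : 'M[R]_d) : 'M[R]_d.+1 :=
  \matrix_(a, b) match unlift ord0 a, unlift ord0 b with
                 | None, None => 1 | Some l, Some k => Rg k l | _, _ => 0 end.

Lemma Mrot_unit (R : realType) d (Rg : 'M[R]_d) : Rg^T *m Rg = 1%:M -> Mrot Rg \in unitmx.
Proof.
move=> hRg; have hRg' := mulmx1C hRg.
suff H : (Mrot Rg)^T *m Mrot Rg = 1%:M by case: (mulmx1_unit H).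
apply/matrixP => i j; rewrite !mxE big_ord_recl !mxE.
case: (unliftP ord0 i) => [i' ->|->]; case: (unliftP ord0 j) => [j' ->|->];
  rewrite ?unlift_none /=.
- rewrite mul0r add0r (inj_eq lift_inj).
  have := congr1 (fun M : 'M[R]_d => M i' j') hRg'; rewrite /= !mxE => <-.
  by apply: eq_bigr => l _; rewrite !mxE !liftK.
- by rewrite big1 ?mul0r ?mulr0 ?mulr1 ?addr0 // => l _; rewrite !mxE !liftK ?unlift_none /= ?mulr0 ?mul0r.
- by rewrite big1 ?mul0r ?mulr0 ?mulr1 ?addr0 // => l _; rewrite !mxE !liftK ?unlift_none /= ?mulr0 ?mul0r.
- by rewrite big1 ?mul0r ?mulr0 ?mulr1 ?addr0 // => l _; rewrite !mxE !liftK ?unlift_none /= ?mulr0 ?mul0r.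
Qed.

Lemma Jbar_rot (R : realType) (d q : nat) (c : 'I_q -> 'cV[R]_d) (w : 'I_q -> R) (cs : R)
  (Rg : 'M[R]_d) (hRg : Rg^T *m Rg = 1%:M) (sg : {perm 'I_q})
  (hc : forall i, c (sg i) = Rg *m c i) (hwg : forall i, w (sg i) = w i) u :
  Jbar c w cs (Rg *m u) = Pmat R sg *m Jbar c w cs u *m Mrot Rg.
Proof.
apply/matrixP => i j; rewrite /Pmat -row_permE !mxE big_ord_recl !mxE.
set i' := (sg^-1)%g i.
have ei : i = sg i' by rewrite /i' permKV.
case: (unliftP ord0 j) => [k ->|->]; rewrite ?liftK ?unlift_none /=.
- rewrite mulr0 add0r.
  under eq_bigr => l _ do rewrite !mxE !liftK /= partial_hcomp.
  rewrite [in LHS]ei partial_hcomp hc hwg dotvRR // !mxE.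
  rewrite -/i'.
  set sq := Num.sqrt (w i'); set D := dotv (c i') u.
  rewrite [RHS](eq_bigr (fun l => sq / (2 * cs ^+ 2) * (Rg k l * c i' l 0)
     + sq * 2 * D / (8 * cs ^+ 4) * (Rg k l * c i' l 0)
     - sq * 2 / (4 * cs ^+ 2) * (Rg k l * u l 0))); last by move=> l _; ring.
  rewrite sumrB big_split /= -!mulr_sumr.
  ring.
- rewrite mulr1 big1 ?addr0; last by move=> l _; rewrite !mxE liftK unlift_none mulr0.
  by rewrite ei /hcomp hc hwg !dotvRR.
Qed.

Theorem mainTheorem1 (R : realType) (d q : nat) (hd : (0 < d)%N) (hq : (0 < q)%N)
  (c : 'I_q -> 'cV[R]_d) (w : 'I_q -> R) (cs : R)
  (hw : forall i, 0 < w i) (hcs : 0 < cs)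
  (hiso : lattice_isotropic c w cs)
  (Rg : 'M[R]_d) (hRg : Rg^T *m Rg = 1%:M)
  (sg : {perm 'I_q})
  (hc : forall i, c (sg i) = Rg *m c i) (hwg : forall i, w (sg i) = w i)
  (u : 'cV[R]_d) (hrank : \rank (Jbar c w cs u) = d.+1) :
  \rank (Jbar c w cs (Rg *m u)) = d.+1 /\
  denoise c w cs (Rg *m u) *m Pmat R sg = Pmat R sg *m denoise c w cs u.
Proof.
have hJ : Jbar c w cs (Rg *m u) = Pmat R sg *m Jbar c w cs u *m Mrot Rg.
  exact: Jbar_rot.
set P := Pmat R sg; set J := Jbar c w cs u; set M := Mrot Rg.
have hPP : P^T *m P = 1%:M by rewrite /P /Pmat tr_perm_mx -perm_mxM mulVg perm_mx1.
have uP : P \in unitmx by case: (mulmx1_unit hPP).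
have uPT : P^T \in unitmx by rewrite unitmx_tr.
have uM : M \in unitmx by exact: Mrot_unit.
have uMT : M^T \in unitmx by rewrite unitmx_tr.
have uA : J^T *m J \in unitmx by exact: gram_unit.
split; first by rewrite hJ rank_PM.
rewrite /denoise hJ -/J.
have -> : (P *m J *m M)^T *m (P *m J *m M) = M^T *m (J^T *m J) *m M.
  rewrite !trmx_mul !mulmxA -(mulmxA _ P^T P) hPP mulmx1.
  by rewrite -!mulmxA.
rewrite invmx3 // !trmx_mul !mulmxA (mulmxK uM) (mulmxKV uMT).
by rewrite -(mulmxA _ P^T P) hPP mulmx1.
Qed.
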